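(* Consider a CMILS instance and let $(x,y)$ satisfy $x_{s,i}\in[0,1]$ for all $i\in[N]$, $s\in[r_i]$, $\sum_{s\in[r_i]}x_{s,i}=1$ for every $i\in[N]$, and $y\in[0,1]^T$. For every interval $(a,b]$ over $[T]$ let $R_{a,b}:=\sum_{i\in[N]:\ r_i\in(a,b]}\max\{1-\frac52x_{[a],i},0\}d_i$. Let $(a,b]$ be an interval with $R_{a,b}>0$, let $I=\{i\in[N]: r_i\in(a,b],\ x_{[a],i}<\frac25\}$, and let $(S_1,S_2)$ be any partition of $(a,b]$ into two parts with $C(S_1)<R_{a,b}$. If $$C(S_1)+\sum_{s\in S_2}\min\{C_s,\,d(I)-C(S_1)\}\,y_s+\sum_{i\in I}x_{[T]\setminus(S_1\cup S_2),i}\,d_i\ \ge\ d(I),$$ then either $$\sum_{s\in S_2}\min\{C_s,\,R_{a,b}-C(S_1)\}\,y_s\ \ge\ R_{a,b}-C(S_1)\quad\text{or}\quad\sum_{s\in S_2:\ C_s\ge R_{a,b}-C(S_1)}y_s\ \ge\ \tfrac35.$$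
   Context: CMILS instance: periods $[T]$, items $[N]$; item $i$ has demand $d_i>0$ due by time $r_i\in[T]$; period $s$ has capacity $C_s>0$ (and ordering cost $K_s>0$); holding costs are irrelevant here. Notation: $x_{s,i}=0$ for $s>r_i$; $x_{S,i}=\sum_{s\in S}x_{s,i}$ for $S\subseteq[T]$; $[a]=\{1,\dots,a\}$ ($[0]=\emptyset$); $(a,b]=\{a+1,\dots,b\}$ and an interval over $[T]$ is $(a,b]$ with integers $0\le a<b\le T$; $C(S)=\sum_{s\in S}C_s$; $d(I)=\sum_{i\in I}d_i$. *)

(* Defs.v *)
From HB Require Import structures.
From mathcomp Require Import all_boot all_order all_algebra.
Set Implicit Arguments. Unset Strict Implicit. Unset Printing Implicit Defensive.
Import Order.TTheory GRing.Theory Num.Theory.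
Local Open Scope ring_scope.

(* Periods are the naturals 1..T; items are 'I_N.
   A subset S of periods is a boolean predicate on nat (only s in [T] matter). *)

Definition xS (R : realFieldType) (T : nat) (x : nat -> R) (S : pred nat) : R :=
  \sum_(1 <= s < T.+1 | S s) x s.

Definition xpre (R : realFieldType) (x : nat -> R) (a : nat) : R :=
  \sum_(1 <= s < a.+1) x s.

Definition capS (R : realFieldType) (T : nat) (C : nat -> R) (S : pred nat) : R :=
  \sum_(1 <= s < T.+1 | S s) C s.

Definition dem (R : realFieldType) (N : nat) (d : 'I_N -> R) (I : pred 'I_N) : R :=
  \sum_(i < N | I i) d i.

Definition Rab (R : realFieldType) (N : nat) (r : 'I_N -> nat) (d : 'I_N -> R)
  (x : nat -> 'I_N -> R) (a b : nat) : R :=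
  \sum_(i < N | (a < r i <= b)%N)
     Num.max (1 - (5%:R / 2%:R) * xpre (fun s => x s i) a) 0 * d i.

(* Main.v *)
Require Import Defs.
From HB Require Import structures.
From mathcomp Require Import all_boot all_order all_algebra.
From mathcomp Require Import ring lra zify.
Import Order.TTheory GRing.Theory Num.Theory.
Local Open Scope ring_scope.

Theorem lemma2 (R : realFieldType) (T N : nat)
  (r : 'I_N -> nat) (d : 'I_N -> R) (C : nat -> R)
  (x : nat -> 'I_N -> R) (y : nat -> R)
  (* CMILS instance *)
  (hr : forall i, (1 <= r i <= T)%N)
  (hd : forall i, 0 < d i)
  (hC : forall s, (1 <= s <= T)%N -> 0 < C s)
  (* convention x_{s,i} = 0 for s > r_i *)
  (hx0 : forall s i, (r i < s)%N -> x s i = 0)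
  (* the point (x, y) *)
  (hx01 : forall i s, (1 <= s <= r i)%N -> 0 <= x s i <= 1)
  (hxsum : forall i, \sum_(1 <= s < (r i).+1) x s i = 1)
  (hy : forall s, (1 <= s <= T)%N -> 0 <= y s <= 1)
  (* the interval (a,b] *)
  (a b : nat) (hab : (a < b <= T)%N)
  (hR : 0 < Rab r d x a b)
  (* the partition (S1, S2) of (a,b] *)
  (S1 S2 : pred nat)
  (hpart : forall s, (a < s <= b)%N = S1 s || S2 s)
  (hdisj : forall s, ~~ (S1 s && S2 s))
  (hS1 : capS T C S1 < Rab r d x a b) :
  let I : pred 'I_N := fun i =>
      (a < r i <= b)%N && (xpre (fun s => x s i) a < 2%:R / 5%:R) in
  let Rv := Rab r d x a b in
  let CS1 := capS T C S1 in
  capS T C S1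
    + \sum_(1 <= s < T.+1 | S2 s) Num.min (C s) (dem d I - CS1) * y s
    + \sum_(i < N | I i)
        xS T (fun s => x s i) (fun s => ~~ S1 s && ~~ S2 s) * d i
    >= dem d I ->
  (\sum_(1 <= s < T.+1 | S2 s) Num.min (C s) (Rv - CS1) * y s >= Rv - CS1)
  \/ (\sum_(1 <= s < T.+1 | S2 s && (C s >= Rv - CS1)) y s >= 3%:R / 5%:R).
Proof.
move=> I Rv CS1 H.
set D := dem d I.
set X := \sum_(i < N | I i) xpre (fun s => x s i) a * d i.
have FR : Rv = \sum_(i < N | I i) (1 - (5%:R/2%:R) * xpre (fun s => x s i) a) * d i.
  rewrite /Rv /Rab (bigID I) /= [X in _ + X]big1 ?addr0.
    apply: eq_big => i; first by rewrite /I; case: (a < r i <= b)%N.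
    move=> /andP[_ /andP[_ Hi]].
    have h0 : 0 <= 1 - 5%:R / 2%:R * xpre (fun s => x s i) a by lra.
    by rewrite (max_l h0).
  move=> i /andP[h1 h2].
  move: h2; rewrite /I h1 /= -leNgt => h2.
  have h0 : 1 - 5%:R / 2%:R * xpre (fun s => x s i) a <= 0 by lra.
  by rewrite (max_r h0) mul0r.
have FX : forall i, I i -> xS T (fun s => x s i) (fun s => ~~ S1 s && ~~ S2 s) = xpre (fun s => x s i) a.
  move=> i /andP[/andP[hai hib] _].
  have haT : (a.+1 <= T.+1)%N by case/andP: hab => h1 h2; apply: leq_trans h2; apply: ltnW.
  rewrite /xS (big_cat_nat _ haT) //= [X in _ + X]big1_seq ?addr0.
    rewrite /xpre big_nat_cond [RHS]big_nat_cond; apply: eq_bigl => s.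
    case: (boolP (1 <= s < a.+1)%N) => //= /andP[_ hs].
    by rewrite -negb_or -hpart ltnNge -ltnS hs.
  move=> s /andP[]; rewrite -negb_or -hpart mem_index_iota => hn /andP[hs _].
  apply: hx0; move: hn; rewrite hs /= -ltnNge => hn; exact: leq_trans hn.
have HX : \sum_(i < N | I i) xS T (fun s => x s i) (fun s => ~~ S1 s && ~~ S2 s) * d i = X.
  by apply: eq_bigr => i Hi; rewrite FX.
have ED : D - Rv = (5%:R/2%:R) * X.
  rewrite FR /D /dem /X -sumrB mulr_sumr; apply: eq_bigr => i _; ring.
have X0 : 0 <= X.
  apply: sumr_ge0 => i /andP[/andP[hai _] _]; apply: mulr_ge0; last exact: ltW.
  rewrite /xpre big_nat_cond; apply: sumr_ge0 => s /andP[/andP[h1 h2] _].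
  have hs : (1 <= s <= r i)%N by lia.
  by case/andP: (hx01 i s hs).
set Y := \sum_(1 <= s < T.+1 | S2 s && (Rv - CS1 <= C s)) y s.
have F3 : \sum_(1 <= s < T.+1 | S2 s) Num.min (C s) (D - CS1) * y s <=
   \sum_(1 <= s < T.+1 | S2 s) Num.min (C s) (Rv - CS1) * y s + (D - Rv) * Y.
  rewrite /Y big_mkcondr mulr_sumr -big_split /=.
  apply: ler_sum => s hs.
  have hy0 : 0 <= y s.
    have := hpart s; rewrite hs orbT => /andP[h1 h2].
    have hs' : (1 <= s <= T)%N by case/andP: hab => *; lia.
    by case/andP: (hy s hs').
  have hE : 0 <= D - Rv by rewrite ED mulr_ge0 // divr_ge0 // ler0n.
  case: (leP (Rv - CS1) (C s)) => hc.
    have : Num.min (C s) (D - CS1) <= Rv - CS1 + (D - Rv).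
      by rewrite ge_min; apply/orP; right; apply: le_trans (lexx _) _; lra.
    move=> hm; rewrite -mulrDl ler_wpM2r //.
  rewrite mulr0 addr0 ler_wpM2r // ge_min lexx //.
case: (lerP (3%:R / 5%:R) Y) => hY; [by right|left].
have hXY : 0 <= X * (3%:R/5%:R - Y) by rewrite mulr_ge0 // subr_ge0 ltW.
move: H; rewrite HX => H.
have HDR : D - Rv = 5%:R/2%:R * X := ED.
rewrite -/CS1 in H F3.
rewrite ED in F3. rewrite -/D in H. lra.
Qed.
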